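(* Let $1\le s<n$ and $0<m<\binom{n}{s}$, and let $m=\sum_{k=0}^{\ell-1}\binom{n_{s-k}}{s-k}$ be the $s$-cascade representation of $m$. Then the $(n-s)$-cascade representation of $m'=\binom{n}{s}-m$ is $m'=\sum_{j=0}^{k-1}\binom{n'_{n-s-j}}{n-s-j}$ where $n_{s-\ell+1}=n'_{n-s-k+1}$ and, writing $b$ for this common value, \[\{b,n_{s-\ell+2},\dots,n_s\}\cup\{b,n'_{n-s-k+2},\dots,n'_{n-s}\}=\{b,b+1,\dots,n-1\},\] \[\{b,n_{s-\ell+2},\dots,n_s\}\cap\{b,n'_{n-s-k+2},\dots,n'_{n-s}\}=\{b\}.\] In particular $k+\ell-1=n-b$, i.e. $k=n-\ell-b+1$.
   Context: A strict $q$-cascade is an integer sequence $n_q>n_{q-1}>\dots>n_{q-\ell+1}$ with $0\le\ell\le q$ and $n_{q-j}\ge q-j$ for all $j$. Every integer $m\ge 0$ can be written uniquely as $m=\sum_{j=0}^{\ell-1}\binom{n_{q-j}}{q-j}$ with a strict $q$-cascade; this is the $q$-cascade representation of $m$, of length $\ell$. *)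

(* Defs.v *)
From mathcomp Require Import all_boot.
Set Implicit Arguments. Unset Strict Implicit. Unset Printing Implicit Defensive.

(* A q-cascade n_q > n_{q-1} > ... > n_{q-l+1} is represented by the list
   c = [:: n_q; n_{q-1}; ...; n_{q-l+1}], so that nth 0 c j = n_{q-j}. *)
Definition strict_cascade (q : nat) (c : seq nat) : bool :=
  [&& size c <= q,
      sorted (fun a b => b < a) c &
      all (fun j => q - j <= nth 0 c j) (iota 0 (size c))].

Definition cascade_val (q : nat) (c : seq nat) : nat :=
  \sum_(j < size c) 'C(nth 0 c j, q - j).

(* Main.v *)
Require Import Defs.
From mathcomp Require Import all_boot.
From mathcomp Require Import zify.
Set Implicit Arguments. Unset Strict Implicit.

Lemma sc_cons q a d : strict_cascade q (a::d) ->
  [/\ 0 < q, q <= a, strict_cascade q.-1 d & forall x d', d = x::d' -> x < a].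
Proof.
rewrite /strict_cascade /= => /and3P [Hs Hp Ha].
move: Ha; rewrite subn0 => /andP [Hqa Ha].
split => //; first by lia.
- apply/and3P; split; first by lia.
  + exact: path_sorted Hp.
  + move: Ha; rewrite -[1]/(1+0) iotaDl all_map.
    apply: sub_all => j /=; rewrite add1n.
    by have -> : q - j.+1 = q.-1 - j by lia.
- by move=> x d' Ed; move: Hp; rewrite Ed /= => /andP [].
Qed.

Lemma cv_cons q a d : cascade_val q (a::d) = 'C(a,q) + cascade_val q.-1 d.
Proof.
rewrite /cascade_val /= big_ord_recl /= subn0; congr (_ + _).
apply: eq_bigr => i _ /=.
by have -> : q - bump 0 i = q.-1 - i by rewrite /bump /=; lia.
Qed.

Lemma cv_bound q a d : strict_cascade q (a::d) -> cascade_val q (a::d) < 'C(a.+1, q).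
Proof.
elim: d q a => [|x d IH] q a /sc_cons [q0 qa Hd Hx].
  rewrite cv_cons /cascade_val /= big_ord0 addn0.
  case: q q0 qa {Hd} => // q _ qa; rewrite binS -[X in X < _]addn0 ltn_add2l bin_gt0.
  by lia.
have Hb := IH _ _ Hd.
have xa := Hx _ _ erefl.
case: q q0 qa Hd Hb => // q _ qa Hd Hb; rewrite binS cv_cons ltn_add2l /=.
apply: (leq_trans Hb); exact: leq_bin2l.
Qed.

Lemma cv_pos q a d : strict_cascade q (a::d) -> 0 < cascade_val q (a::d).
Proof.
move=> /sc_cons [_ qa _ _]; rewrite cv_cons.
have : 0 < 'C(a,q) by rewrite bin_gt0.
lia.
Qed.

Lemma cv_nil q : cascade_val q [::] = 0.
Proof. by rewrite /cascade_val big_ord0. Qed.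

Lemma head_le N q a d : strict_cascade q (a::d) -> cascade_val q (a::d) < 'C(N,q) -> a < N.
Proof.
move=> Hs Hv; rewrite ltnNge; apply/negP => Na.
have := leq_bin2l q Na; move: Hv; rewrite cv_cons; lia.
Qed.

Lemma binS' n s t : s.+1 + t = n.+1 -> 'C(n.+1, s.+1) = 'C(n, s.+1) + 'C(n, t).
Proof.
move=> E; rewrite binS; congr (_ + _).
have -> : s = n - t by lia.
by rewrite bin_sub //; lia.
Qed.

Lemma bin_symm N s t : s + t = N -> 'C(N, s) = 'C(N, t).
Proof. move=> E; have -> : s = N - t by lia. by rewrite bin_sub //; lia. Qed.

Definition concl N (c c' : seq nat) :=
  [/\ last 0 c' = last 0 c,
      (forall x, (x \in c) || (x \in c') = (last 0 c <= x < N)),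
      (forall x, (x \in c) && (x \in c') = (x == last 0 c)) &
      size c' + size c - 1 = N - last 0 c].

Lemma concl_sym N c c' : concl N c' c -> concl N c c'.
Proof.
case=> E U I S; split => [|x|x|]; rewrite ?E //.
- by rewrite orbC U.
- by rewrite andbC I.
- by rewrite addnC.
Qed.

Lemma gen N : forall s t a d a' e, 1 <= s -> 1 <= t -> s + t = N ->
  strict_cascade s (a::d) -> strict_cascade t (a'::e) ->
  cascade_val s (a::d) + cascade_val t (a'::e) = 'C(N, s) ->
  concl N (a::d) (a'::e).
Proof.
elim: N => [|n IH] s t a d a' e s1 t1 st Hc Hc' Hv; first by lia.
have core : forall s t a d a' e, 1 <= s -> 1 <= t -> s + t = n.+1 ->
  strict_cascade s (a::d) -> strict_cascade t (a'::e) ->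
  cascade_val s (a::d) + cascade_val t (a'::e) = 'C(n.+1, s) -> a = n ->
  concl n.+1 (a::d) (a'::e).
  clear s t a d a' e s1 t1 st Hc Hc' Hv.
  move=> s t a d a' e s1 t1 st Hc Hc' Hv an; subst a.
  case: s s1 st Hc Hv => [//|s] _ st Hc Hv.
  rewrite (binS' st) cv_cons /= in Hv.
  case: d Hc Hv => [|y d'] Hc Hv.
  - rewrite cv_nil in Hv.
    have Hv' : cascade_val t (a'::e) = 'C(n, t) by lia.
    have a'n : a' < n.+1.
      apply: (head_le Hc'); rewrite Hv'.
      case: t t1 st {Hv Hv' Hc'} => // t _ st; rewrite binS.
      have : 0 < 'C(n, t) by rewrite bin_gt0; lia.
      lia.
    have a'n2 : n <= a'.
      rewrite leqNgt; apply/negP => lt.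
      have := cv_bound Hc'; have := leq_bin2l t lt; lia.
    have Ea : a' = n by lia.
    subst a'.
    move: Hv'; rewrite cv_cons.
    case: e Hc' Hv => [|z e] Hc' Hv Hv'.
      split => //= [x|x|].
      + rewrite !inE orbb; case: (ltngtP x n) => h //=; lia.
      + by rewrite !inE andbb.
      + lia.
    have [_ _ He _] := sc_cons Hc'.
    have := cv_pos He; lia.
  - have [s0 _ Hd _] := sc_cons Hc.
    have st' : s + t = n by lia.
    have [] := IH s t y d' a' e => //.
      by case: (sc_cons Hd).
      rewrite (bin_symm st'); move: Hv => /=; lia.
    move=> E U I S.
    have bL : last 0 (y::d') < n.
      have := U (last 0 (y::d')); rewrite /= mem_last /=; lia.
    split.
    + by rewrite E.
    + move=> x; rewrite inE -orbA U /=; move: bL => /=.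
      by case: (ltngtP x n) => h; rewrite ?h /=; lia.
    + move=> x; rewrite inE andb_orl I /=.
      case Ex: (x == n); last by [].
      move/eqP: Ex => ->; rewrite andTb.
      by have := U n; rewrite ltnn andbF => /norP [_ /negbTE ->].
    + move: S bL => /=; lia.
have [s0 sa _ _] := sc_cons Hc.
have [t0 ta _ _] := sc_cons Hc'.
have Ct := bin_symm st.
have pc := cv_pos Hc; have pc' := cv_pos Hc'.
have an : a < n.+1 by apply: (head_le Hc); lia.
have a'n : a' < n.+1 by apply: (head_le Hc'); lia.
case: (ltngtP a n) => [lt||eq]; last 2 first; first by lia.
  exact: (core _ _ _ _ _ _ s1 t1 st Hc Hc' Hv eq).
apply: concl_sym.
have a'e : a' = n.
  apply/eqP; rewrite eqn_leq -ltnS a'n /= leqNgt; apply/negP => lt'.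
  have := cv_bound Hc; have := leq_bin2l s lt.
  have := cv_bound Hc'; have := leq_bin2l t lt'.
  case: s s1 st Hc Hv Ct {s0 sa core pc an} => // s _ st Hc Hv Ct.
  rewrite (binS' st) in Hv.
  lia.
apply: (core t s a' e a d) => //; first by lia.
by rewrite -Ct addnC.
Qed.

Theorem mainTheorem9 (n s m : nat) (c c' : seq nat) :
  1 <= s -> s < n -> 0 < m -> m < 'C(n, s) ->
  strict_cascade s c -> cascade_val s c = m ->
  strict_cascade (n - s) c' -> cascade_val (n - s) c' = 'C(n, s) - m ->
  let b := last 0 c in
  [/\ last 0 c' = b,
      (forall x, (x \in c) || (x \in c') = (b <= x < n)),
      (forall x, (x \in c) && (x \in c') = (x == b)) &
      size c' + size c - 1 = n - b].
Proof.
move=> s1 sn m0 mC Hc Hv Hc' Hv' b.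
case: c Hc Hv @b => [|a d] Hc Hv b; first by move: Hv; rewrite cv_nil; lia.
case: c' Hc' Hv' => [|a' e] Hc' Hv'; first by move: Hv'; rewrite cv_nil; lia.
have [] := gen (N:=n) (s:=s) (t:=n-s) s1 _ _ Hc Hc' _; try lia.
by move=> E U I S; split.
Qed.
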